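(* Let $G$ be a finite simple graph and let $\mathcal{V}$ be a maximum-cardinality collection of pairwise edge-disjoint triangles of $G$. Let $t\notin\mathcal{V}$ be a triangle sharing an edge with exactly two triangles $\psi_1,\psi_2\in\mathcal{V}$, where neither $\psi_1$ nor $\psi_2$ is of type $0$. Then: (1) $type(t)\neq[3,3]$, so the type of $t$ is either $[1,3]$ or $[1,1]$. (2) If $type(t)=[1,3]$ with $type(\psi_1)=1$ and $type(\psi_2)=3$, then either (i) $base(\psi_1)\in E(t)$, or (ii) exactly one triangle is singly-attached to $\psi_1$ and its anchoring vertex lies in $V(t)$; in this case $base(\psi_1)$ does not contain the common vertex of $V(\psi_1)\cap V(\psi_2)$.
   Context: Triangles are sets of three pairwise adjacent vertices, identified with their edge sets. A triangle $t\notin\mathcal{V}$ is singly-attached to $\psi\in\mathcal{V}$ if $\psi$ is the only triangle of $\mathcal{V}$ sharing an edge with $t$; the shared edge is a base-edge and the vertex of $V(t)\setminus V(\psi)$ is the anchoring vertex of $t$. For $\psi\in\mathcal{V}$, $base(\psi)$ is the set of edges of $\psi$ that are base-edges of triangles singly-attached to $\psi$, and $\psi$ has type $i$ if $|base(\psi)|=i$; when $|base(\psi)|=1$ we also write $base(\psi)$ for its unique base-edge. A triangle $t\notin\mathcal{V}$ sharing an edge with exactly two triangles $\psi_1,\psi_2\in\mathcal{V}$ has type $[type(\psi_1),type(\psi_2)]$, listed in nondecreasing order. *)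

(* Defs.v *)
(* A finite simple graph is a symmetric irreflexive relation
   g on a finType T. Triangles are represented by their vertex sets (for a
   simple graph the edge set determines and is determined by the vertex set);
   an edge of a triangle is a 2-subset of its vertex set. *)
From mathcomp Require Import all_boot.
Set Implicit Arguments. Unset Strict Implicit. Unset Printing Implicit Defensive.

Section Tri.
Variables (T : finType) (g : rel T).

Definition triangle (A : {set T}) : bool :=
  (#|A| == 3) && [forall x in A, forall y in A, (x != y) ==> g x y].

Definition share_edge (A B : {set T}) : bool := 2 <= #|A :&: B|.

Definition packing (P : {set {set T}}) : bool :=
  [forall A in P, triangle A] &&
  [forall A in P, forall B in P, (A != B) ==> ~~ share_edge A B].

Definition max_packing (P : {set {set T}}) : Prop :=
  packing P /\ forall W : {set {set T}}, packing W -> #|W| <= #|P|.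

(* t is singly-attached to psi (w.r.t. V): psi is the only member of V
   sharing an edge with t.  The base-edge is t :&: psi, the anchoring
   vertex is the unique element of t :\: psi. *)
Definition singly_attached (V : {set {set T}}) (t psi : {set T}) : bool :=
  [&& triangle t, t \notin V, psi \in V, share_edge t psi &
      [forall phi in V, share_edge t phi ==> (phi == psi)]].

Definition base (V : {set {set T}}) (psi : {set T}) : {set {set T}} :=
  [set f : {set T} | [exists t : {set T}, singly_attached V t psi && (f == t :&: psi)]].

Definition type (V : {set {set T}}) (psi : {set T}) : nat := #|base V psi|.

End Tri.

(* Main.v *)
Require Import Defs.
From mathcomp Require Import all_boot.
Set Implicit Arguments. Unset Strict Implicit. Unset Printing Implicit Defensive.

Ltac elim_or :=
  repeat match goal with
  | H : is_true (_ || _) |- _ => case/orP: H => H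
  | H : is_true (_ && _) |- _ => case/andP: H => H ?
  | H : is_true (?i == ?i) |- _ => clear H
  | H : is_true (?i == ?j) |- _ => move/eqP: H => H; first [subst i | subst j]
  end.

Ltac fin :=
  match goal with
  | H : is_true (?a != ?a) |- _ => by rewrite eqxx in H
  | H : is_true (~~ ((?a == ?a) && (?b == ?b))) |- _ => by rewrite !eqxx in H
  end.

Ltac mem := rewrite ?inE ?eqxx ?orbT //.

Lemma card_set3 (T : finType) (a b c : T) : a != b -> b != c -> a != c -> #|[set a; b; c]| = 3.
Proof.
move=> ab bc ac; rewrite setUC !cardsU1 cards1 !inE.
by rewrite ab (eq_sym c a) (negbTE ac) (eq_sym c b) (negbTE bc).
Qed.

Lemma card_set3_le (T : finType) (a b c : T) : #|[set a; b; c]| <= 3.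
Proof. rewrite setUC !cardsU1 cards1; by do 2 case: (_ \notin _). Qed.

Lemma card_set2_le (T : finType) (a b : T) : #|[set a; b]| <= 2.
Proof. rewrite !cardsU1 cards1; by case: (_ \notin _). Qed.

Section S.
Variables (T : finType) (g : rel T).
Hypothesis g_sym : symmetric g.

Lemma share_edgeP (A B : {set T}) :
  reflect (exists u v, [/\ u != v, u \in A, u \in B, v \in A & v \in B]) (share_edge A B).
Proof.
apply: (iffP card_gt1P).
- move=> [u [v [/setIP [uA uB] /setIP [vA vB] uv]]]; by exists u, v.
- move=> [u [v [uv uA uB vA vB]]]; exists u, v; split => //; exact/setIP.
Qed.

Lemma share_of (A B : {set T}) u v : u != v -> u \in A -> v \in A -> u \in B -> v \in B ->
  share_edge A B.
Proof. move=> *; apply/share_edgeP; by exists u, v. Qed.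

Lemma tri_from (A : {set T}) u v : #|A| = 3 -> u \in A -> v \in A -> u != v ->
  exists w, [/\ w != u, w != v & A = [set u; v; w]].
Proof.
move=> cA uA vA uv.
have c1 : #|A :\ u :\ v| == 1.
  move: cA; rewrite (cardsD1 u) uA (cardsD1 v (A :\ u)) !inE eq_sym uv vA /=.
  by rewrite !add1n => -[->].
case/cards1P: c1 => w Hw.
have : w \in A :\ u :\ v by rewrite Hw inE.
rewrite !inE => /and3P [wv wu wA].
exists w; split => //.
apply/setP => i; rewrite !inE.
case: (eqVneq i u) => [->|iu]; first by rewrite uA.
case: (eqVneq i v) => [->|iv]; first by rewrite vA.
move/setP: Hw => /(_ i); rewrite !inE iu iv /= => ->//.
Qed.

Lemma triP (A : {set T}) x y : triangle g A -> x \in A -> y \in A -> x != y -> g x y.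
Proof.
case/andP=> _ /forallP H xA yA xy.
by have := H x; rewrite xA /= => /forallP /(_ y); rewrite yA xy.
Qed.

Lemma tri_card (A : {set T}) : triangle g A -> #|A| = 3.
Proof. by case/andP => /eqP. Qed.

Lemma tri_mk (a b c : T) : a != b -> b != c -> a != c -> g a b -> g b c -> g a c ->
  triangle g [set a; b; c].
Proof.
move=> ab bc ac gab gbc gac; apply/andP; split; first by rewrite card_set3.
apply/forallP => i; apply/implyP => iin; apply/forallP => j; apply/implyP => jin.
apply/implyP => ij; rewrite !inE in iin jin.
elim_or; try fin; by rewrite // g_sym.
Qed.

Lemma share_self (A : {set T}) : triangle g A -> share_edge A A.
Proof. by move=> /tri_card cA; rewrite /share_edge setIid cA. Qed.


Variable V : {set {set T}}.
Hypothesis HP : packing g V.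
Hypothesis HM : forall W, packing g W -> #|W| <= #|V|.

Lemma pack_tri A : A \in V -> triangle g A.
Proof. by case/andP: HP => /forallP H _ AV; have := H A; rewrite AV. Qed.

Lemma pack_disj A B : A \in V -> B \in V -> A != B -> ~~ share_edge A B.
Proof.
case/andP: HP => _ /forallP H AV BV AB.
by have := H A; rewrite AV /= => /forallP /(_ B); rewrite BV AB.
Qed.

Lemma pack_uniq psi phi x y : psi \in V -> phi \in V -> x != y ->
  x \in phi -> y \in phi -> x \in psi -> y \in psi -> phi = psi.
Proof.
move=> psiV phiV xy xphi yphi xpsi ypsi; apply/eqP; apply: contraT => ne.
by have := pack_disj phiV psiV ne; rewrite (share_of xy xphi yphi xpsi ypsi).
Qed.

Notation sa := (singly_attached g V).

Lemma sa_tri s psi : sa s psi -> triangle g s.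
Proof. by case/and5P. Qed.
Lemma sa_notin s psi : sa s psi -> s \notin V.
Proof. by case/and5P. Qed.
Lemma sa_in s psi : sa s psi -> psi \in V.
Proof. by case/and5P. Qed.
Lemma sa_share s psi : sa s psi -> share_edge s psi.
Proof. by case/and5P. Qed.
Lemma sa_uniq s psi phi : sa s psi -> phi \in V -> share_edge s phi -> phi = psi.
Proof.
case/and5P => _ _ _ _ /forallP H phiV sh.
by have := H phi; rewrite phiV sh /= => /eqP.
Qed.
Lemma sa_uniq2 s psi phi x y : sa s psi -> phi \in V -> x != y ->
  x \in s -> y \in s -> x \in phi -> y \in phi -> phi = psi.
Proof. move=> S phiV xy *; apply: (sa_uniq S phiV); exact: (share_of xy). Qed.

Lemma sa_mk s psi : triangle g s -> s \notin V -> psi \in V -> share_edge s psi ->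
  (forall phi, phi \in V -> share_edge s phi -> phi = psi) -> sa s psi.
Proof.
move=> ts sV pV sh H; apply/and5P; split => //; apply/forallP => phi.
apply/implyP => phiV; apply/implyP => sh'; apply/eqP; exact: H.
Qed.

Lemma grow (R N : {set {set T}}) : R \subset V ->
  (forall A, A \in N -> triangle g A) ->
  (forall A B, A \in N -> B \in N -> A != B -> ~~ share_edge A B) ->
  (forall A B, A \in N -> B \in V -> share_edge A B -> B \in R) ->
  #|N| <= #|R|.
Proof.
move=> RV Ntri Ndisj Natt.
have disj : (V :\: R) :&: N = set0.
  apply/setP => A; rewrite !inE; apply/negbTE; apply/negP => /andP [/andP [AR AV] AN].
  by move: AR; rewrite (Natt A A AN AV (share_self (Ntri A AN))).
have pW : packing g ((V :\: R) :|: N).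
  apply/andP; split.
    apply/forallP => A; apply/implyP; rewrite !inE => /orP [/andP [_ AV]|AN].
      exact: pack_tri. exact: Ntri.
  apply/forallP => A; apply/implyP; rewrite !inE => HA.
  apply/forallP => B; apply/implyP; rewrite !inE => HB; apply/implyP => AB.
  case/orP: HA => [/andP [AR AV]|AN]; case/orP: HB => [/andP [BR BV]|BN].
  - exact: pack_disj.
  - apply/negP => sh; move: AR; rewrite (Natt B A BN AV) //.
    by rewrite /share_edge setIC.
  - by apply/negP => sh; move: BR; rewrite (Natt A B AN BV).
  - exact: Ndisj.
have := HM pW; rewrite cardsU disj cards0 subn0 cardsD (setIidPr RV).
have := subset_leq_card RV.
move=> h1 h2. rewrite -(leq_add2l (#|V| - #|R|)) (leq_trans h2) //.
by rewrite subnK.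
Qed.

Lemma not_share_neq A B : triangle g A -> ~~ share_edge A B -> A != B.
Proof. by move=> tA; apply: contra => /eqP <-; exact: share_self. Qed.

Lemma grow1 psi s1 s2 : psi \in V -> triangle g s1 -> triangle g s2 ->
  ~~ share_edge s1 s2 ->
  (forall phi, phi \in V -> share_edge s1 phi -> phi = psi) ->
  (forall phi, phi \in V -> share_edge s2 phi -> phi = psi) -> False.
Proof.
move=> psiV t1 t2 d12 a1 a2.
have := @grow [set psi] [set s1; s2].
rewrite sub1set psiV cards1 cards2 (not_share_neq t1 d12) => /(_ isT) H.
suff : 2 <= 1 by []. apply: H.
- by move=> A; rewrite !inE => /orP [] /eqP ->.
- move=> A B; rewrite !inE => /orP [] /eqP -> /orP [] /eqP ->; rewrite ?eqxx //.
  by move=> _; rewrite /share_edge setIC.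
- move=> A B; rewrite !inE => /orP [] /eqP -> BV sh; apply/eqP; auto.
Qed.

Lemma grow2 psi1 psi2 a b c : psi1 \in V -> psi2 \in V ->
  triangle g a -> triangle g b -> triangle g c ->
  ~~ share_edge a b -> ~~ share_edge a c -> ~~ share_edge b c ->
  (forall phi, phi \in V -> share_edge a phi -> phi = psi1 \/ phi = psi2) ->
  (forall phi, phi \in V -> share_edge b phi -> phi = psi1 \/ phi = psi2) ->
  (forall phi, phi \in V -> share_edge c phi -> phi = psi1 \/ phi = psi2) -> False.
Proof.
move=> V1 V2 ta tb tc dab dac dbc aa ab ac.
have := @grow [set psi1; psi2] [set a; b; c].
rewrite subUset !sub1set V1 V2 card_set3 ?(not_share_neq ta dab)
  ?(not_share_neq ta dac) ?(not_share_neq tb dbc) //.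
move=> /(_ isT) H.
suff : 3 <= 2 by [].
apply: leq_trans (card_set2_le psi1 psi2); apply: H.
- by move=> A; rewrite !inE => /orP [/orP []|] /eqP ->.
- have sC X Y : ~~ share_edge X Y -> ~~ share_edge Y X by rewrite /share_edge setIC.
  move=> A B; rewrite !inE => /orP [/orP []|] /eqP -> /orP [/orP []|] /eqP ->;
    rewrite ?eqxx // => _; auto.
- move=> A B; rewrite !inE => /orP [/orP []|] /eqP -> BV sh;
    [case: (aa B BV sh)|case: (ab B BV sh)|case: (ac B BV sh)] => ->; by rewrite eqxx ?orbT.
Qed.

Lemma set_rot (a b c : T) : [set a; b; c] = [set b; c; a].
Proof. apply/setP => i; rewrite !inE; apply/idP/idP => H; elim_or; mem. Qed.

Lemma base_fwd psi u v w : psi = [set u; v; w] -> u != v -> v != w -> u != w ->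
  [set u; v] \in base g V psi ->
  exists a, [/\ a != u, a != v, a != w & sa [set u; v; a] psi].
Proof.
move=> Hpsi uv vw uw; rewrite inE => /existsP [s /andP [S /eqP E]].
have /setIP [us _] : u \in s :&: psi by rewrite -E !inE eqxx.
have /setIP [vs _] : v \in s :&: psi by rewrite -E !inE eqxx orbT.
have [a [au av sE]] := tri_from (tri_card (sa_tri S)) us vs uv.
exists a; split => //; last by rewrite -sE.
apply/negP => /eqP aw; subst a.
have : w \in s :&: psi by rewrite inE sE Hpsi; mem.
rewrite -E !inE => /orP [] /eqP ew; subst; fin.
Qed.

Lemma base_bwd psi u v w a : psi = [set u; v; w] -> u != v -> v != w -> u != w ->
  a != u -> a != v -> a != w -> sa [set u; v; a] psi -> [set u; v] \in base g V psi.
Proof.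
move=> Hpsi uv vw uw au av aw S; rewrite inE; apply/existsP; exists [set u; v; a].
rewrite S /=; apply/eqP/setP => i; rewrite Hpsi !inE; apply/idP/idP => H.
  elim_or; mem.
case/andP: H => H1 H2; elim_or; try fin; mem.
Qed.

Lemma base_sub psi u v w f : psi \in V -> psi = [set u; v; w] -> u != v -> v != w -> u != w ->
  f \in base g V psi -> [\/ f = [set u; v], f = [set v; w] | f = [set w; u]].
Proof.
move=> psiV Hpsi uv vw uw; rewrite inE => /existsP [s /andP [S /eqP E]].
case/share_edgeP: (sa_share S) => i [j [ij iS ipsi jS jpsi]].
have [k [ki kj sE]] := tri_from (tri_card (sa_tri S)) iS jS ij.
have kpsi : k \notin psi.
  apply/negP => kpsi; move: (sa_notin S).
  suff -> : s = psi by rewrite psiV.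
  apply/eqP; rewrite eqEcard (tri_card (sa_tri S)) (tri_card (pack_tri psiV)) leqnn andbT.
  by rewrite sE !subUset !sub1set ipsi jpsi kpsi.
have fE : f = [set i; j].
  rewrite E; apply/setP => x; rewrite sE !inE; apply/idP/idP => H.
    case/andP: H => H1 H2; elim_or; mem. by rewrite H2 in kpsi.
  elim_or; rewrite ?eqxx ?orbT /= ?ipsi ?jpsi; done.
rewrite fE; move: ipsi jpsi; rewrite Hpsi !inE => ipsi jpsi.
elim_or; try fin.
all: try by [constructor 1|constructor 2|constructor 3|constructor 1; rewrite setUC|constructor 2; rewrite setUC|constructor 3; rewrite setUC].
Qed.

Lemma anchor psi u v w a b : psi \in V -> psi = [set u; v; w] ->
  u != v -> v != w -> u != w -> a != u -> a != v -> a != w ->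
  b != u -> b != v -> b != w ->
  sa [set u; v; a] psi -> sa [set v; w; b] psi -> a = b.
Proof.
move=> psiV Hpsi uv vw uw au av aw bu bv bw S1 S2.
apply/eqP; apply: contraT => ab; exfalso.
apply: (grow1 psiV (sa_tri S1) (sa_tri S2) _ (fun phi => sa_uniq S1) (fun phi => sa_uniq S2)).
apply/negP => /share_edgeP [i [j [ij i1 i2 j1 j2]]]; rewrite !inE in i1 i2 j1 j2.
elim_or; fin.
Qed.

Lemma third psi u v w a : psi \in V -> psi = [set u; v; w] ->
  u != v -> v != w -> u != w -> a != u -> a != v -> a != w ->
  sa [set u; v; a] psi -> sa [set v; w; a] psi -> sa [set w; u; a] psi.
Proof.
move=> psiV Hpsi uv vw uw au av aw S1 S2.
have wu : w != u by rewrite eq_sym.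
have vu : v != u by rewrite eq_sym.
have wv : w != v by rewrite eq_sym.
have ua : u != a by rewrite eq_sym.
have wa : w != a by rewrite eq_sym.
apply: sa_mk => //.
- apply: tri_mk => //.
  + by apply: (triP (pack_tri psiV)); rewrite // Hpsi; mem.
  + by apply: (triP (sa_tri S1)); mem.
  + by apply: (triP (sa_tri S2)); mem.
- apply/negP => inV.
  have E := sa_uniq2 S1 inV ua.
  have : a \in psi by rewrite -E; mem.
  by rewrite Hpsi !inE (negbTE au) (negbTE av) (negbTE aw).
- by apply: (share_of wu); rewrite ?Hpsi; mem.
- move=> phi phiV /share_edgeP [i [j [ij i1 i2 j1 j2]]]; rewrite !inE in i1 j1.
  elim_or; try fin;
  first [ by apply: (pack_uniq psiV phiV ij); rewrite ?Hpsi; mem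
        | by apply: (sa_uniq2 S1 phiV ij); mem
        | by apply: (sa_uniq2 S2 phiV ij); mem ].
Qed.

Lemma two_edges psi u v w : psi \in V -> psi = [set u; v; w] ->
  u != v -> v != w -> u != w ->
  [set u; v] \in base g V psi -> [set v; w] \in base g V psi -> [set w; u] \in base g V psi.
Proof.
move=> psiV Hpsi uv vw uw B1 B2.
have Hpsi' : psi = [set v; w; u] by rewrite Hpsi set_rot.
have Hpsi'' : psi = [set w; u; v] by rewrite Hpsi' set_rot.
have wu : w != u by rewrite eq_sym.
have vu : v != u by rewrite eq_sym.
have wv : w != v by rewrite eq_sym.
have [a [au av aw S1]] := base_fwd Hpsi uv vw uw B1.
have [b [bv bw bu S2]] := base_fwd Hpsi' vw wu vu B2.
have ab := anchor psiV Hpsi uv vw uw au av aw bu bv bw S1 S2. subst b.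
have S3 := third psiV Hpsi uv vw uw au av aw S1 S2.
exact: (base_bwd Hpsi'' wu uv wv aw au av S3).
Qed.

Lemma set_neq (A B : {set T}) x : x \in A -> x \notin B -> A != B.
Proof. by move=> xA xB; apply/eqP => E; move: xB; rewrite -E xA. Qed.

Lemma all_three psi u v w : psi \in V -> psi = [set u; v; w] ->
  u != v -> v != w -> u != w -> 1 < type g V psi ->
  [/\ [set u; v] \in base g V psi, [set v; w] \in base g V psi & [set w; u] \in base g V psi].
Proof.
move=> psiV Hpsi uv vw uw.
have Hpsi' : psi = [set v; w; u] by rewrite Hpsi set_rot.
have Hpsi'' : psi = [set w; u; v] by rewrite Hpsi' set_rot.
have wu : w != u by rewrite eq_sym.
have vu : v != u by rewrite eq_sym.
have wv : w != v by rewrite eq_sym.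
have H12 : [set u; v] \in base g V psi -> [set v; w] \in base g V psi ->
  [/\ [set u; v] \in base g V psi, [set v; w] \in base g V psi & [set w; u] \in base g V psi].
  by move=> x y; split => //; exact: (two_edges psiV Hpsi).
have H23 : [set v; w] \in base g V psi -> [set w; u] \in base g V psi ->
  [/\ [set u; v] \in base g V psi, [set v; w] \in base g V psi & [set w; u] \in base g V psi].
  by move=> x y; split => //; exact: (two_edges psiV Hpsi').
have H31 : [set w; u] \in base g V psi -> [set u; v] \in base g V psi ->
  [/\ [set u; v] \in base g V psi, [set v; w] \in base g V psi & [set w; u] \in base g V psi].
  by move=> x y; split => //; exact: (two_edges psiV Hpsi'').
rewrite /type => /card_gt1P [f1 [f2 [F1 F2 f12]]].
have := base_sub psiV Hpsi uv vw uw F1; have := base_sub psiV Hpsi uv vw uw F2.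
case=> E2; case=> E1; subst f1 f2; rewrite ?eqxx // in f12; auto.
Qed.

Lemma type_le3 psi u v w : psi \in V -> psi = [set u; v; w] ->
  u != v -> v != w -> u != w -> type g V psi <= 3.
Proof.
move=> psiV Hpsi uv vw uw; rewrite /type.
apply: leq_trans (card_set3_le [set u; v] [set v; w] [set w; u]).
apply: subset_leq_card; apply/subsetP => f /(base_sub psiV Hpsi uv vw uw) [] ->; mem.
Qed.

Lemma type_not2 psi u v w : psi \in V -> psi = [set u; v; w] ->
  u != v -> v != w -> u != w -> type g V psi <> 2.
Proof.
move=> psiV Hpsi uv vw uw H2.
have [B1 B2 B3] := all_three psiV Hpsi uv vw uw ltac:(by rewrite H2).
have : #|[set [set u; v]; [set v; w]; [set w; u]]| <= type g V psi.
  apply: subset_leq_card; apply/subsetP => f Hf; rewrite !inE in Hf.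
  by case/orP: Hf => [/orP []|] /eqP ->.
rewrite H2 card_set3 //.
- by apply: (set_neq (x:=u)); rewrite !inE ?eqxx // negb_or uv uw.
- by apply: (set_neq (x:=v)); rewrite !inE ?eqxx // negb_or (eq_sym v u) uv vw.
- by apply: (set_neq (x:=v)); rewrite !inE ?eqxx ?orbT // negb_or vw (eq_sym v u) uv.
Qed.

Lemma type3 psi u v w : psi \in V -> psi = [set u; v; w] ->
  u != v -> v != w -> u != w -> type g V psi = 3 ->
  exists a, [/\ a \notin psi, sa [set u; v; a] psi, sa [set v; w; a] psi & sa [set w; u; a] psi].
Proof.
move=> psiV Hpsi uv vw uw H3.
have [B1 B2 B3] := all_three psiV Hpsi uv vw uw ltac:(by rewrite H3).
have Hpsi' : psi = [set v; w; u] by rewrite Hpsi set_rot.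
have Hpsi'' : psi = [set w; u; v] by rewrite Hpsi' set_rot.
have wu : w != u by rewrite eq_sym.
have vu : v != u by rewrite eq_sym.
have wv : w != v by rewrite eq_sym.
have [a [au av aw S1]] := base_fwd Hpsi uv vw uw B1.
have [b [bv bw bu S2]] := base_fwd Hpsi' vw wu vu B2.
have [c [cw cu cv S3]] := base_fwd Hpsi'' wu uv wv B3.
have ab := anchor psiV Hpsi uv vw uw au av aw bu bv bw S1 S2. subst b.
have ac := anchor psiV Hpsi' vw wu vu av aw au cv cw cu S2 S3. subst c.
exists a; split => //.
by rewrite Hpsi !inE negb_or negb_or au av aw.
Qed.

Lemma type_cases psi u v w : psi \in V -> psi = [set u; v; w] ->
  u != v -> v != w -> u != w -> [\/ type g V psi = 0, type g V psi = 1 | type g V psi = 3].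
Proof.
move=> psiV Hpsi uv vw uw.
have := type_le3 psiV Hpsi uv vw uw; have := type_not2 psiV Hpsi uv vw uw.
case: (type g V psi) => [|[|[|[|n]]]] //; by [constructor 1|constructor 2|constructor 3].
Qed.

Lemma core (t psi1 psi2 : {set T}) x y z p q
  (Ht : triangle g t) (HtV : t \notin V)
  (H1 : psi1 \in V) (H2 : psi2 \in V) (H12 : psi1 != psi2)
  (Honly : forall phi, phi \in V -> share_edge t phi -> phi = psi1 \/ phi = psi2)
  (Hn1 : type g V psi1 <> 0) (Hn2 : type g V psi2 <> 0)
  (Et : t = [set x; y; z]) (E1 : psi1 = [set x; y; p]) (E2 : psi2 = [set y; z; q])
  (xy : x != y) (yz : y != z) (xz : x != z) (px : p != x) (py : p != y)
  (qy : q != y) (qz : q != z) :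
  (~ (type g V psi1 = 3 /\ type g V psi2 = 3) /\
   ((type g V psi1 = 1 /\ type g V psi2 = 3) \/
    (type g V psi1 = 3 /\ type g V psi2 = 1) \/
    (type g V psi1 = 1 /\ type g V psi2 = 1)))
  /\
  (type g V psi1 = 1 -> type g V psi2 = 3 ->
     (forall f, f \in base g V psi1 -> f \subset t)
     \/
     ((exists t' : {set T},
         [set s : {set T} | singly_attached g V s psi1] = [set t'] /\
         t' :\: psi1 \subset t) /\
      (forall c, c \in psi1 :&: psi2 ->
         forall f, f \in base g V psi1 -> c \notin f))).
Proof.
have pz : p != z.
  apply/negP => /eqP pz; subst p; by move: HtV; rewrite Et -E1 H1.
have qx : q != x.
  apply/negP => /eqP qx; subst q; move: HtV; by rewrite Et set_rot -E2 H2.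
have pq : p != q.
  apply/negP => /eqP pq; subst q; move/negP: H12; apply; apply/eqP.
  by apply: (pack_uniq H2 H1 (x:=y) (y:=p)); rewrite ?E1 ?E2; mem; rewrite eq_sym.
have yp : y != p by rewrite eq_sym.
have yx : y != x by rewrite eq_sym.
have xp : x != p by rewrite eq_sym.
have zq : z != q by rewrite eq_sym.
have yq : y != q by rewrite eq_sym.
have E1' : psi1 = [set p; x; y] by rewrite E1 set_rot set_rot.
have E1'' : psi1 = [set y; p; x] by rewrite E1 set_rot.
have share1 : forall (s : {set T}) u v, u != v -> u \in s -> v \in s -> u \in psi1 -> v \in psi1 ->
   sa s psi2 -> False.
  move=> s u v uv us vs u1 v1 S; move/negP: H12; apply; apply/eqP.
  exact: (sa_uniq2 S H1 uv).
have share2 : forall (s : {set T}) u v, u != v -> u \in s -> v \in s -> u \in psi2 -> v \in psi2 ->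
   sa s psi1 -> False.
  move=> s u v uv us vs u1 v1 S; move/negP: H12; apply; apply/eqP; apply/esym.
  exact: (sa_uniq2 S H2 uv).
have A2 : type g V psi2 = 3 -> exists a2, [/\ a2 != x, a2 != y, a2 != z & a2 != q] /\
     [/\ sa [set y; z; a2] psi2, sa [set z; q; a2] psi2 & sa [set q; y; a2] psi2].
  move=> T2; have [a2 [a2n SB1 SB2 SB3]] := type3 H2 E2 yz zq yq T2.
  have : a2 \notin [set y; z; q] by rewrite -E2.
  rewrite !inE !negb_or => /andP [/andP [a2y a2z] a2q].
  exists a2; split; split => //.
  apply/negP => /eqP e; subst a2.
  by apply: (share1 _ x y xy _ _ _ _ SB1); rewrite ?E1; mem.
have KEY : forall al, al != x -> al != y -> al != p -> al != z ->
    sa [set p; x; al] psi1 -> type g V psi2 = 3 -> False.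
  move=> al alx aly alp alz S T2.
  have [a2 [[a2x a2y a2z a2q] [SB1 SB2 SB3]]] := A2 T2.
  have npa : ~~ ((p == a2) && (al == q)).
    apply/negP => /andP [/eqP e1 /eqP e2].
    by apply: (share1 _ y a2 _ _ _ _ _ SB3); rewrite ?E1 -?e1; mem; rewrite eq_sym.
  apply: (grow2 H1 H2 Ht (sa_tri S) (sa_tri SB2) _ _ _ Honly).
  - rewrite Et; apply/negP => /share_edgeP [i [j [ij i1 i2 j1 j2]]];
      rewrite !inE in i1 i2 j1 j2; elim_or; fin.
  - rewrite Et; apply/negP => /share_edgeP [i [j [ij i1 i2 j1 j2]]];
      rewrite !inE in i1 i2 j1 j2; elim_or; fin.
  - apply/negP => /share_edgeP [i [j [ij i1 i2 j1 j2]]];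
      rewrite !inE in i1 i2 j1 j2; elim_or; fin.
  - by move=> phi pV sh; left; exact: (sa_uniq S pV sh).
  - by move=> phi pV sh; right; exact: (sa_uniq SB2 pV sh).
have KEY2 : forall al, al != x -> al != y -> al != p ->
    sa [set y; p; al] psi1 -> type g V psi2 = 3 -> False.
  move=> al alx aly alp S T2.
  have [a2 [[a2x a2y a2z a2q] [SB1 SB2 SB3]]] := A2 T2.
  have alz : al != z.
    apply/negP => /eqP e; subst al.
    by apply: (share2 _ y z yz _ _ _ _ S); rewrite ?E2; mem.
  have alq : al != q.
    apply/negP => /eqP e; subst al.
    by apply: (share2 _ y q yq _ _ _ _ S); rewrite ?E2; mem.
  apply: (grow2 H1 H2 Ht (sa_tri S) (sa_tri SB2) _ _ _ Honly).
  - rewrite Et; apply/negP => /share_edgeP [i [j [ij i1 i2 j1 j2]]];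
      rewrite !inE in i1 i2 j1 j2; elim_or; fin.
  - rewrite Et; apply/negP => /share_edgeP [i [j [ij i1 i2 j1 j2]]];
      rewrite !inE in i1 i2 j1 j2; elim_or; fin.
  - apply/negP => /share_edgeP [i [j [ij i1 i2 j1 j2]]];
      rewrite !inE in i1 i2 j1 j2; elim_or; fin.
  - by move=> phi pV sh; left; exact: (sa_uniq S pV sh).
  - by move=> phi pV sh; right; exact: (sa_uniq SB2 pV sh).
have not33 : ~ (type g V psi1 = 3 /\ type g V psi2 = 3).
  move=> [T1 T2].
  have [a1 [a1n S1 S2 S3]] := type3 H1 E1' px xy py T1.
  have : a1 \notin [set x; y; p] by rewrite -E1.
  rewrite !inE !negb_or => /andP [/andP [a1x a1y] a1p].
  have a1z : a1 != z.
    apply/negP => /eqP e; subst a1.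
    by apply: (share2 _ y z yz _ _ _ _ S2); rewrite ?E2; mem.
  exact: (KEY a1 a1x a1y a1p a1z S1 T2).
split.
  split => //.
  have := type_cases H1 E1 xy yp xp; have := type_cases H2 E2 yz zq yq.
  case=> T2; case=> T1; rewrite ?T1 ?T2 in not33 Hn1 Hn2 * => //; try (exfalso; by apply: not33); auto.
move=> T1 T2.
case/cards1P: (introT eqP T1) => e Eb.
have eB : e \in base g V psi1 by rewrite Eb inE.
case: (base_sub H1 E1 xy yp xp eB) => Ee; subst e.
- left => f; rewrite Eb inE => /eqP ->; rewrite Et; apply/subsetP => i.
  rewrite !inE => H; elim_or; mem.
- exfalso.
  have [al [aly alp alx S]] := base_fwd E1'' yp px (yx) eB.
  exact: (KEY2 al alx aly alp S T2).
right.
have [al [alp alx aly S]] := base_fwd E1' px xy py eB.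
have alz : al = z.
  apply/eqP; apply: contraT => ne; exfalso; exact: (KEY al alx aly alp ne S T2).
subst al.
split.
  exists [set p; x; z]; split.
    apply/setP => s; rewrite !inE; apply/idP/eqP; last by move=> ->.
    move=> Ss.
    have : s :&: psi1 \in base g V psi1.
      by rewrite inE; apply/existsP; exists s; rewrite Ss eqxx.
    rewrite Eb inE => /eqP Es.
    have /setIP [ps _] : p \in s :&: psi1 by rewrite Es; mem.
    have /setIP [xs _] : x \in s :&: psi1 by rewrite Es; mem.
    have [b [bp bx sE]] := tri_from (tri_card (sa_tri Ss)) ps xs px.
    have by' : b != y.
      apply/negP => /eqP e; subst b.
      have : y \in s :&: psi1 by rewrite inE sE E1; mem.
      by rewrite Es !inE (negbTE yp) (negbTE yx).
    have bz : b = z.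
      apply/eqP; apply: contraT => ne; exfalso.
      by apply: (KEY b bx by' bp ne _ T2); rewrite -sE.
    by rewrite sE bz.
  apply/subsetP => i; rewrite E1 Et !inE => /andP [Hn Hi].
  case/orP: Hi => [/orP []|] /eqP e; subst i; rewrite ?eqxx ?orbT //= in Hn *.
move=> c Hc f; rewrite Eb inE => /eqP ->.
rewrite E1 E2 !inE in Hc; case/andP: Hc => Hc1 Hc2.
rewrite !inE; apply/negP => H; elim_or; fin.
Qed.
End S.

Lemma set_swap (T : finType) (a b c : T) : [set a; b; c] = [set b; a; c].
Proof. apply/setP => i; rewrite !inE; apply/idP/idP => H; elim_or; mem. Qed.

Theorem proposition12 (T : finType) (g : rel T)
  (g_sym : symmetric g) (g_irr : irreflexive g)
  (V : {set {set T}}) (HV : max_packing g V)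
  (t psi1 psi2 : {set T})
  (Ht : triangle g t) (HtV : t \notin V)
  (H1 : psi1 \in V) (H2 : psi2 \in V) (H12 : psi1 != psi2)
  (Hs1 : share_edge t psi1) (Hs2 : share_edge t psi2)
  (Honly : forall phi, phi \in V -> share_edge t phi -> phi = psi1 \/ phi = psi2)
  (Hn1 : type g V psi1 <> 0) (Hn2 : type g V psi2 <> 0) :
  (* (1) type(t) <> [3,3]; so type(t) is [1,3] or [1,1] *)
  (~ (type g V psi1 = 3 /\ type g V psi2 = 3) /\
   ((type g V psi1 = 1 /\ type g V psi2 = 3) \/
    (type g V psi1 = 3 /\ type g V psi2 = 1) \/
    (type g V psi1 = 1 /\ type g V psi2 = 1)))
  /\
  (* (2) *)
  (type g V psi1 = 1 -> type g V psi2 = 3 ->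
     (* (i) base(psi1) is an edge of t *)
     (forall f, f \in base g V psi1 -> f \subset t)
     \/
     (* (ii) exactly one triangle t' is singly-attached to psi1, its anchoring
        vertex lies in V(t), and base(psi1) avoids the common vertex of psi1, psi2 *)
     ((exists t' : {set T},
         [set s : {set T} | singly_attached g V s psi1] = [set t'] /\
         t' :\: psi1 \subset t) /\
      (forall c, c \in psi1 :&: psi2 ->
         forall f, f \in base g V psi1 -> c \notin f))).
Proof.
case: HV => HP HM.
match goal with |- ?G =>
  have fin : forall x y z p, t = [set x; y; z] -> psi1 = [set x; y; p] ->
    y \in psi2 -> z \in psi2 -> x != y -> y != z -> x != z -> p != x -> p != y -> G end.
  move=> x y z p Et E1 y2 z2 xy yz xz px py.
  have [q [qy qz E2]] := tri_from (tri_card (pack_tri HP H2)) y2 z2 yz.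
  exact: (core g_sym HP HM Ht HtV H1 H2 H12 Honly Hn1 Hn2 Et E1 E2 xy yz xz px py qy qz).
case/share_edgeP: Hs1 => i [j [ij it i1 jt j1]].
have [z [zi zj Et]] := tri_from (tri_card Ht) it jt ij.
have [p [pi pj E1]] := tri_from (tri_card (pack_tri HP H1)) i1 j1 ij.
case/share_edgeP: Hs2 => k [l [kl kt k2 lt l2]].
have ji : j != i by rewrite eq_sym.
have iz : i != z by rewrite eq_sym.
have jz : j != z by rewrite eq_sym.
have Et' : t = [set j; i; z] by rewrite Et set_swap.
have E1' : psi1 = [set j; i; p] by rewrite E1 set_swap.
rewrite Et !inE in kt lt.
elim_or; try fin.
all: first [ by exfalso; move/negP: H12; apply; apply/eqP; apply: (pack_uniq HP H2 H1 kl); rewrite ?E1; mem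
           | by apply: (fin j i z p Et' E1')
           | by apply: (fin i j z p Et E1) ].
Qed.
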